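(* For every integer $s \geq 1$, every integer $m \geq 1$, every integer $\ell > |V(H[s])| + m + s$, and every graph $H[s,\ell,m]$ constructed as described, it holds that $c(H[s,\ell,m]) \leq 2$.
   Context: Construction. Let $s \geq 1$ and $k = 2^{s-1}$. Let $H[s]$ be any $2k$-regular graph with girth at least $5$, endowed with an orientation in which every vertex has exactly $k$ outgoing and $k$ incoming edges. Given an integer $\ell \geq 1$, build $H[s,\ell]$: for each vertex $a$ of $H[s]$ take a complete balanced binary tree $T(a)$ of height $s$ with root $r(a)$ and $2^s = 2k$ leaves; let $r^{\mathrm{in}}(a), r^{\mathrm{out}}(a)$ be the two children of $r(a)$ and $T^{\mathrm{in}}(a), T^{\mathrm{out}}(a)$ the subtrees rooted at them. Associate bijectively the $k$ leaves of $T^{\mathrm{in}}(a)$ with the $k$ incoming edges at $a$ and the $k$ leaves of $T^{\mathrm{out}}(a)$ with the $k$ outgoing edges at $a$. For each edge $ab$ of $H[s]$ oriented from $a$ to $b$, join the leaf of $T^{\mathrm{out}}(a)$ associated with $ab$ to the leaf of $T^{\mathrm{in}}(b)$ associated with $ab$ by a path $P(ab)$ of length $2\ell+1$ (with $2\ell$ new inner vertices); let $e(ab)$ be its middle edge, with endpoint $v(a,b)$ on the side of $a$ and $v(b,a)$ on the side of $b$. Given an integer $m \geq 1$, build $H[s,\ell,m]$: take two vertex-disjoint copies $H_1, H_2$ of $H[s,\ell]$ (with notation indexed by $1,2$), and for every edge $ab$ of $H[s]$ identify $e_1(ab)$ with $e_2(ab)$ so that $v_1(a,b)=v_2(a,b)$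 and $v_1(b,a)=v_2(b,a)$. For each vertex $a$ of $H[s]$ attach to $r_1(a)$ a new path $Q(a)$ of length $m$ with other endpoint $q(a)$. Finally add a cycle $C$ of length $|V(H[s])|$ passing through all vertices $q(a)$, $a \in V(H[s])$. Classical Cops and Robber: players alternate turns, cops first; the cops are placed on vertices, then the robber is placed on a vertex; in a turn each piece of the moving player may stay or move to an adjacent vertex; cops win if some cop is on the robber's vertex; $c(G)$ is the least number of cops that can force a win in finitely many turns. *)

(* Defs.v *)
From mathcomp Require Import all_boot.
Set Implicit Arguments.
Unset Strict Implicit.
Unset Printing Implicit Defensive.

Definition und (V : finType) (arc : rel V) : rel V :=
  fun a b => arc a b || arc b a.

Definition girth_ge (V : finType) (e : rel V) (g : nat) : Prop :=
  forall c : seq V, 3 <= size c -> cycle e c -> uniq c -> g <= size c.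

Definition Hs_oriented (s : nat) (V : finType) (arc : rel V) : Prop :=
  [/\ (forall a, ~~ arc a a) /\ (forall a b, arc a b -> ~~ arc b a),
      (forall a, #|[set b | und arc a b]| = 2 * 2 ^ (s - 1)),
      (forall a, #|[set b | arc a b]| = 2 ^ (s - 1)),
      (forall a, #|[set b | arc b a]| = 2 ^ (s - 1)) &
      girth_ge (und arc) 5].

Definition nbc (W : finType) (adj : rel W) (x y : W) : bool :=
  (x == y) || adj x y.

(* cops_win adj C r : it is the cops' turn, cops are at C, robber at r,
   and the cops can force a capture in finitely many turns (inductive,
   i.e. least-fixed-point, definition of "can force a win"). *)
Inductive cops_win (W : finType) (adj : rel W) (k : nat)
  : {ffun 'I_k -> W} -> W -> Prop :=
| CW_caught (C : {ffun 'I_k -> W}) (r : W) : [exists i, C i == r] -> cops_win adj C r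
| CW_move (C : {ffun 'I_k -> W}) (r : W) (C' : {ffun 'I_k -> W}) :
    (forall i, nbc adj (C i) (C' i)) ->
    ([exists i, C' i == r] \/
     (forall r', nbc adj r r' -> cops_win adj C' r')) ->
    cops_win adj C r.

(* k cops have a winning strategy: cops are placed first, then the robber,
   then the cops move first. *)
Definition k_cops_win (W : finType) (adj : rel W) (k : nat) : Prop :=
  exists C0 : {ffun 'I_k -> W}, forall r0 : W, cops_win adj C0 r0.

Definition cop_number_le (W : finType) (adj : rel W) (n : nat) : Prop :=
  exists j, j <= n /\ k_cops_win adj j.

Definition arcT (V : finType) (arc : rel V) := {p : V * V | arc p.1 p.2}.

(* Vertices of H[s,l,m]:
   - Tree (a, c, i): node i (heap numbering: root 0, children of i are
     2i+1, 2i+2; r^in = 1, r^out = 2) of the tree T_c(a) in copy c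
     (false = copy 1, true = copy 2); there are 2^(s+1)-1 nodes;
     leaves are 2^s-1 .. 2^(s+1)-2, those of T^in are 2^s-1+j (j<k), those
     of T^out are 2^s-1+k+j (j<k).
   - Mid (e, t): the shared endpoints of the middle edge e(ab) for the
     arc e = ab; t = false is v(a,b), t = true is v(b,a).
   - Side (e, c, t, d): non-shared inner vertex of P_c(ab) on the side
     of a (t = false) or of b (t = true) at distance d+1 from the leaf.
   - Q (a, j): vertex of the path Q(a), at distance j+1 from r_1(a);
     q(a) = Q (a, m-1). *)
Definition HV (s l m : nat) (V : finType) (arc : rel V) : finType :=
  ((V * bool * 'I_(2 ^ s.+1 - 1))
   + ((arcT arc * bool)
      + ((arcT arc * bool * bool * 'I_(l - 1)) + (V * 'I_m))))%type.

Section Construction.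
Variables (s l m : nat) (V : finType) (arc : rel V).
Variables (pin pout : arcT arc -> 'I_(2 ^ (s - 1))).
Variable (sigma : 'I_#|V| -> V).

Let k := 2 ^ (s - 1).

Definition leaf_ok (a : V) (e : arcT arc) (t : bool) (i : nat) : bool :=
  if t then ((val e).2 == a) && (i == 2 ^ s - 1 + pin e)
  else ((val e).1 == a) && (i == 2 ^ s - 1 + k + pout e).

Definition cyc_next (a b : V) : bool :=
  [exists i : 'I_#|V|, exists j : 'I_#|V|,
     [&& sigma i == a, sigma j == b & val j == (val i).+1 %% #|V|]].

Definition Hgen (x y : HV s l m arc) : bool :=
  match x, y with
  | inl (a, c, i), inl (b, c', j) =>
      [&& a == b, c == c' & (val j == (val i).*2.+1) || (val j == (val i).*2.+2)]
  | inl (a, c, i), inr (inr (inl (e, c', t, d))) =>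
      [&& c == c', val d == 0 & leaf_ok a e t i]
  | inl (a, c, i), inr (inl (e, t)) =>
      (l - 1 == 0) && leaf_ok a e t i
  | inr (inr (inl (e, c, t, d))), inr (inr (inl (e', c', t', d'))) =>
      [&& e == e', c == c', t == t' & val d' == (val d).+1]
  | inr (inr (inl (e, c, t, d))), inr (inl (e', t')) =>
      [&& e == e', t == t' & val d == l - 2]
  | inr (inl (e, false)), inr (inl (e', true)) => e == e'
  | inl (a, c, i), inr (inr (inr (b, j))) =>
      [&& a == b, c == false, val i == 0 & val j == 0]
  | inr (inr (inr (a, i))), inr (inr (inr (b, j))) =>
      ((a == b) && (val j == (val i).+1))
      || [&& val i == m - 1, val j == m - 1 & cyc_next a b]
  | _, _ => false
  end.

Definition Hslm_adj : rel (HV s l m arc) := fun x y => Hgen x y || Hgen y x.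

End Construction.

(* Main.v *)
Require Import Defs.
From mathcomp Require Import all_boot.
From mathcomp Require Import zify.
Set Implicit Arguments.
Unset Strict Implicit.
Unset Printing Implicit Defensive.

Section Generic.
Variables (W : finType) (adj : rel W).
Hypothesis adj_sym : forall x y, adj x y -> adj y x.

Lemma nbc_refl x : nbc adj x x.
Proof. by rewrite /nbc eqxx. Qed.

Lemma nbc_sym x y : nbc adj x y -> nbc adj y x.
Proof. by rewrite /nbc eq_sym => /orP[->|/adj_sym ->]; rewrite ?orbT. Qed.

Lemma catch_nbc (C : {ffun 'I_2 -> W}) r i : nbc adj (C i) r -> cops_win adj C r.
Proof.
move=> Hn.
apply: (@CW_move _ _ _ C r [ffun j => if j == i then r else C j]).
  by move=> j; rewrite ffunE; case: eqP => [->|_] //; apply: nbc_refl.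
by left; apply/existsP; exists i; rewrite ffunE eqxx.
Qed.

Lemma reach (P Q : {ffun 'I_2 -> W} -> W -> Prop) (mu : {ffun 'I_2 -> W} -> W -> nat) :
  (forall C r, Q C r -> cops_win adj C r) ->
  (forall C r, P C r -> exists C' : {ffun 'I_2 -> W}, (forall i, nbc adj (C i) (C' i)) /\
      (forall r', nbc adj r r' -> Q C' r' \/ (P C' r' /\ mu C' r' < mu C r))) ->
  forall C r, P C r -> cops_win adj C r.
Proof.
move=> HQ HP C r HPr.
suff H : forall k C r, mu C r < k -> P C r -> cops_win adj C r by exact: (H (mu C r).+1).
elim=> // k IH C1 r1 Hlt HP1.
have [C' [HC' Hr']] := HP C1 r1 HP1.
apply: (CW_move HC'); right => r' Hrr'.
case: (Hr' r' Hrr') => [/HQ //|[HP' Hlt']].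
apply: IH HP'; lia.
Qed.

Variables (D : pred W) (par : W -> W) (dep : W -> nat).
Hypothesis Htree : forall x, x \in D -> 0 < dep x ->
  [/\ par x \in D, dep (par x) = (dep x).-1 & adj x (par x)].

Definition anc c t := (dep c < dep t) && (iter (dep t - dep c) par t == c).
Definition rt x := iter (dep x) par x.
Definition tm u v := [|| u == v, (0 < dep u) && (v == par u) | (0 < dep v) && (u == par v)].

Lemma iter_D x j : x \in D -> j <= dep x ->
  iter j par x \in D /\ dep (iter j par x) = dep x - j.
Proof.
move=> Hx; elim: j => [|j IH] Hj; first by rewrite subn0.
have [H1 H2] := IH (ltnW Hj).
have [H3 H4 _] := Htree H1 ltac:(by rewrite H2 subn_gt0).
by rewrite iterS H3 H4 H2; split => //; lia.
Qed.

Lemma rt_iter x j : x \in D -> j <= dep x -> rt (iter j par x) = rt x.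
Proof.
move=> Hx Hj; have [_ H2] := iter_D Hx Hj.
by rewrite /rt H2 -iterD subnK.
Qed.

Lemma rt_tm u v : u \in D -> v \in D -> tm u v -> rt u = rt v.
Proof.
move=> Hu Hv /or3P[/eqP->//|/andP[Hd /eqP->]|/andP[Hd /eqP->]].
  by symmetry; exact: (rt_iter (j := 1) Hu Hd).
exact: (rt_iter (j := 1) Hv Hd).
Qed.

Lemma other2 (i iG iH : 'I_2) : iG != iH -> i != iG -> i = iH.
Proof.
move=> H1 H2; apply/val_inj; move: H1 H2 (ltn_ord i) (ltn_ord iG) (ltn_ord iH).
rewrite -!(inj_eq val_inj) /= => /eqP H1 /eqP H2; lia.
Qed.

Definition B := \max_(x : W) dep x.

Lemma step_anc c t : c \in D -> t \in D -> anc c t -> ~~ nbc adj c t ->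
  let c' := iter (dep t - dep c).-1 par t in
  [/\ c' \in D, rt c' = rt t, dep c' = (dep c).+1, adj c' c &
   forall t', tm t t' -> t' \in D -> ~~ nbc adj c' t' -> anc c' t'].
Proof.
move=> Hc Ht /andP[Hlt /eqP Hit] Hn.
have Hd2 : 1 < dep t - dep c.
  case E: (dep t - dep c) => [|[|j]] //; first by move: Hlt; rewrite -subn_gt0 E.
  move: Hn; rewrite -Hit E.
  have [_ _ Ha] := Htree Ht (leq_ltn_trans (leq0n _) Hlt).
  by rewrite /= nbc_sym // /nbc Ha orbT.
set j := (dep t - dep c).-1; move=> c'.
have Hjd : dep t = j.+1 + dep c by rewrite /j prednK ?subnK //; [apply: ltnW | apply: ltnW].
have Hj1 : 0 < j by rewrite /j -subn1 subn_gt0.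
have Hj : j <= dep t by rewrite Hjd; lia.
have [Hc'D Hc'd] := iter_D Ht Hj.
have Hdc' : dep c' = (dep c).+1 by rewrite Hc'd Hjd; lia.
have Hcp : c = par c' by rewrite /c' -iterS -Hit Hjd addnK.
have [_ _ Ha] := Htree Hc'D ltac:(by rewrite Hdc').
split => //; first exact: rt_iter.
  by rewrite Hcp.
move=> t' /or3P[/eqP<-|/andP[Hd /eqP Ht']|/andP[Hd /eqP Ht']] HtD Hnt.
- rewrite /anc Hdc' Hjd; apply/andP; split; first by lia.
  by have -> : j.+1 + dep c - (dep c).+1 = j by lia.
- have [_ Hpd _] := Htree Ht Hd.
  have Hj2 : 1 < j.
    case E: j => [|[|jj]] //; first by rewrite E in Hj1.
    by move: Hnt; rewrite Ht' /c' E /nbc eqxx.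
  rewrite /anc Ht' Hpd Hdc' Hjd; apply/andP; split; first by lia.
  have -> : (j.+1 + dep c).-1 - (dep c).+1 = j.-1 by lia.
  by rewrite -iterSr prednK.
- have [_ Hpd _] := Htree HtD Hd.
  have Ht'd : dep t' = (dep t).+1 by rewrite Ht' Hpd prednK.
  rewrite /anc Hdc'; apply/andP; split; first by lia.
  have -> : dep t' - (dep c).+1 = j.+1 by lia.
  by rewrite iterSr -Ht'.
Qed.

Lemma step_nanc c t : c \in D -> t \in D -> ~~ anc c t -> rt c = rt t -> t != c -> 0 < dep c.
Proof.
move=> Hc Ht Hna Hrt Hne.
case E: (dep c) => [|//]; exfalso.
have Hrc : rt c = c by rewrite /rt E.
case E2: (dep t) => [|d].
  by move: Hrt; rewrite Hrc /rt E2 /= => Hx; rewrite Hx eqxx in Hne.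
move/negP: Hna; apply.
apply/andP; split; first by rewrite E E2.
by rewrite E subn0; apply/eqP; rewrite -/(rt t) -Hrt Hrc.
Qed.

Lemma ar1 a b x y B' : b = B' - y -> a = B' - x -> x <= B' -> x = y.+1 -> a < b.
Proof. lia. Qed.
Lemma ar2 a b x y B' : b = B'.+1 + y -> a <= B'.+1 + x -> x = y.-1 -> 0 < y -> a < b.
Proof. lia. Qed.

Definition mu' c t := if anc c t then B - dep c else B.+1 + dep c.

Lemma depB x : dep x <= B.
Proof. exact: (leq_bigmax (F := dep)). Qed.

Lemma mu'_anc c t : anc c t -> mu' c t = B - dep c.
Proof. by rewrite /mu' => ->. Qed.

Lemma mu'_nanc c t : anc c t = false -> mu' c t = B.+1 + dep c.
Proof. by rewrite /mu' => ->. Qed.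

Lemma mu'_le c t : mu' c t <= B.+1 + dep c.
Proof. rewrite /mu'; case: ifP => _; lia. Qed.

Theorem hunt (iG iH : 'I_2) (Ir : W -> Prop) (h gp : W -> W) (Gd : pred W) :
  iG != iH ->
  (forall r r', Ir r -> nbc adj r r' -> nbc adj (gp r) (gp r')) ->
  (forall r, Ir r -> h r \in D) ->
  (forall r, Ir r -> gp r \in Gd) ->
  (forall r r', Ir r -> gp r <> h r -> nbc adj r r' ->
     [\/ gp r' = r', gp r' = h r' | Ir r' /\ tm (h r) (h r')]) ->
  (forall (C : {ffun 'I_2 -> W}) r, C iH \in D -> C iG \in Gd ->
     nbc adj (C iG) (gp r) -> gp r = h r -> cops_win adj C r) ->
  (forall (C : {ffun 'I_2 -> W}) r, Ir r -> C iH \in D -> C iG \in Gd ->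
     nbc adj (C iG) (gp r) -> nbc adj (C iH) (h r) -> cops_win adj C r) ->
  forall (C : {ffun 'I_2 -> W}) r, Ir r -> C iH \in D -> C iG \in Gd ->
     nbc adj (C iG) (gp r) -> rt (C iH) = rt (h r) -> cops_win adj C r.
Proof.
move=> HGH Hgp HhD HGd Hmove HnG HnH.
pose P (C : {ffun 'I_2 -> W}) r := Ir r /\ C iH \in D /\ C iG \in Gd /\
   nbc adj (C iG) (gp r) /\ rt (C iH) = rt (h r) /\ ~~ nbc adj (C iH) (h r) /\ gp r <> h r.
pose Q (C : {ffun 'I_2 -> W}) r := nbc adj (C iG) r \/
  (C iH \in D /\ C iG \in Gd /\ nbc adj (C iG) (gp r) /\ gp r = h r) \/
  (Ir r /\ C iH \in D /\ C iG \in Gd /\ nbc adj (C iG) (gp r) /\ nbc adj (C iH) (h r)).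
have HQ : forall C r, Q C r -> cops_win adj C r.
  move=> C r [H|[[H1 [H2 [H3 H4]]]|[H1 [H2 [H3 [H4 H5]]]]]].
  - exact: catch_nbc H.
  - exact: HnG.
  - exact: HnH.
have HiG : forall (a b : W), [ffun i => if i == iG then a else b] iG = a.
  by move=> a b; rewrite ffunE eqxx.
have HiH : forall (a b : W), [ffun i => if i == iG then a else b] iH = b.
  by move=> a b; rewrite ffunE eq_sym (negbTE HGH).
have Hmv : forall (C : {ffun 'I_2 -> W}) a b, nbc adj (C iG) a -> nbc adj (C iH) b ->
    forall i, nbc adj (C i) ([ffun i => if i == iG then a else b] i).
  move=> C a b Ha Hb i; rewrite ffunE; case: eqP => [->//|/eqP Hi].
  by rewrite (other2 HGH Hi).
have key : forall C r, P C r -> cops_win adj C r.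
  apply: (reach (Q := Q) (mu := fun C r => mu' (C iH) (h r))) => // C r [Ir1 [HD [HG [Hg [Hrt [Hnh Hne]]]]]].
  have Hhr := HhD _ Ir1.
  have HGd1 := HGd _ Ir1.
  have Hne2 : h r != C iH by apply: contra Hnh => /eqP ->; apply: nbc_refl.
  case Hac : (anc (C iH) (h r)).
    have [Hc'D Hrtc' Hdc' Ha Hanc'] := step_anc HD Hhr Hac Hnh.
    set c' := iter _ par (h r) in Hc'D Hrtc' Hdc' Ha Hanc'.
    exists [ffun i => if i == iG then gp r else c']; split.
      by apply: Hmv => //; apply: nbc_sym; rewrite /nbc Ha orbT.
    move=> r' Hrr'; rewrite /Q /P !HiG !HiH.
    have Hgg := Hgp _ _ Ir1 Hrr'.
    case: (Hmove _ _ Ir1 Hne Hrr') => [H1|H1|[Ir2 Htm]].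
    - by left; left; rewrite -H1.
    - by left; right; left.
    - have Hhr' := HhD _ Ir2.
      case: (boolP (nbc adj c' (h r'))) => Hn'.
        by left; right; right.
      case: (eqVneq (gp r') (h r')) => Hge.
        by left; right; left.
      have Hge' : gp r' <> h r' by apply/eqP.
      right; split.
        exact: (conj Ir2 (conj Hc'D (conj HGd1 (conj Hgg (conj (etrans Hrtc' (rt_tm Hhr Hhr' Htm)) (conj isT Hge')))))).
      have E1 := mu'_anc Hac.
      have E2 := mu'_anc (Hanc' _ Htm Hhr' Hn').
      exact: ar1 E1 E2 (depB c') Hdc'.
  have Hc0 := step_nanc HD Hhr (negbT Hac) Hrt Hne2.
  have [HpD Hpd Ha] := Htree HD Hc0.
  exists [ffun i => if i == iG then gp r else par (C iH)]; split.
    by apply: Hmv => //; rewrite /nbc Ha orbT.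
  move=> r' Hrr'; rewrite /Q /P !HiG !HiH.
  have Hgg := Hgp _ _ Ir1 Hrr'.
  case: (Hmove _ _ Ir1 Hne Hrr') => [H1|H1|[Ir2 Htm]].
  - by left; left; rewrite -H1.
  - by left; right; left.
  - have Hhr' := HhD _ Ir2.
    case: (boolP (nbc adj (par (C iH)) (h r'))) => Hn'.
      by left; right; right.
    case: (eqVneq (gp r') (h r')) => Hge.
      by left; right; left.
    have Hge' : gp r' <> h r' by apply/eqP.
    have Hrt2 : rt (par (C iH)) = rt (h r').
      rewrite -(rt_tm Hhr Hhr' Htm) -Hrt.
      exact: (rt_iter (j := 1) HD Hc0).
    right; split.
      exact: (conj Ir2 (conj HpD (conj HGd1 (conj Hgg (conj Hrt2 (conj isT Hge')))))).
    have E1 := mu'_nanc Hac.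
    have E2 := mu'_le (par (C iH)) (h r').
    exact: ar2 E1 E2 Hpd Hc0.
move=> C r Ir1 HD HG Hg Hrt.
case: (boolP (nbc adj (C iH) (h r))) => Hn; first exact: HnH.
case: (eqVneq (gp r) (h r)) => Hge; first exact: HnG.
have Hge' : gp r <> h r by apply/eqP.
exact: key (conj Ir1 (conj HD (conj HG (conj Hg (conj Hrt (conj Hn Hge')))))).
Qed.

End Generic.


Section Concrete.
Variables (s l m : nat) (V : finType) (arc : rel V)
  (pin pout : arcT arc -> 'I_(2 ^ (s - 1))) (sigma : 'I_#|V| -> V).
Hypothesis Hs : 1 <= s.
Hypothesis Hm : 1 <= m.
Hypothesis Hl : #|V| + m + s < l.
Hypothesis Hsig : injective sigma.
Variable a0 : V.
Hypothesis Hout : forall a, exists e : arcT arc, (val e).1 = a.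

Local Notation N := (2 ^ s.+1 - 1).
Local Notation k := (2 ^ (s - 1)).
Local Notation G := (HV s l m arc).
Local Notation adj := (@Hslm_adj s l m V arc pin pout sigma).
Local Notation n := #|V|.

Definition Tr a c (i : 'I_N) : G := inl (a, c, i).
Definition Mi (e : arcT arc) t : G := inr (inl (e, t)).
Definition Si e c t (d : 'I_(l - 1)) : G := inr (inr (inl (e, c, t, d))).
Definition Qu a (j : 'I_m) : G := inr (inr (inr (a, j))).

Inductive E : G -> G -> Prop :=
| E_tree a c (i j : 'I_N) : (j : nat) = ((i : nat)).*2.+1 \/ (j : nat) = ((i : nat)).*2.+2 -> E (Tr a c i) (Tr a c j)
| E_leaf a c (i : 'I_N) e t (d : 'I_(l-1)) : (d : nat) = 0 -> leaf_ok pin pout a e t ((i : nat)) -> E (Tr a c i) (Si e c t d)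
| E_side e c t (d d' : 'I_(l-1)) : (d' : nat) = ((d : nat)).+1 -> E (Si e c t d) (Si e c t d')
| E_sm e c t (d : 'I_(l-1)) : (d : nat) = l - 2 -> E (Si e c t d) (Mi e t)
| E_mid e : E (Mi e false) (Mi e true)
| E_rq a (i : 'I_N) (j : 'I_m) : (i : nat) = 0 -> (j : nat) = 0 -> E (Tr a false i) (Qu a j)
| E_qq a (i j : 'I_m) : (j : nat) = ((i : nat)).+1 -> E (Qu a i) (Qu a j)
| E_cyc a b (i j : 'I_m) : (i : nat) = m - 1 -> (j : nat) = m - 1 -> cyc_next sigma a b -> E (Qu a i) (Qu b j).

Lemma l1_gt0 : 0 < l - 1.
Proof. lia. Qed.

Lemma Hgen_E x y : Hgen pin pout sigma x y -> E x y.
Proof.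
have Hl1 : (l - 1 == 0) = false by apply/negbTE; rewrite -lt0n l1_gt0.
case: x => [[[a c] i]|[[e [|]]|[[[[e c] t] d]|[a j]]]];
case: y => [[[b c'] i']|[[e' [|]]|[[[[e' c'] t'] d']|[b j']]]] //=.
all: try (case/and3P => /eqP Hx _ _; exfalso; move: l1_gt0; rewrite Hx; done).
- case/and3P => /eqP <- /eqP <- H; apply: E_tree.
  by case/orP: H => /eqP H; [left|right].
- by case/and3P => /eqP <- /eqP H1 H2; apply: E_leaf.
- case/and4P => /eqP <- /eqP -> /eqP H1 /eqP H2.
  exact: E_rq.
- by move=> /eqP <-; exact: E_mid.
- by case/and3P => /eqP <- /eqP <- /eqP H; apply: E_sm.
- by case/and3P => /eqP <- /eqP <- /eqP H; apply: E_sm.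
- by case/and4P => /eqP <- /eqP <- /eqP <- /eqP H; apply: E_side.
- case/orP => [/andP[/eqP <- /eqP H]|/and3P[/eqP H1 /eqP H2 H3]].
    exact: E_qq.
  exact: E_cyc.
Qed.

Lemma E_Hgen x y : E x y -> Hgen pin pout sigma x y.
Proof.
case=> /=.
- by move=> a c i j [] ->; rewrite !eqxx // orbT.
- by move=> a c i e t d -> ->; rewrite eqxx.
- by move=> e c t d d' ->; rewrite !eqxx.
- by move=> e c t d ->; rewrite !eqxx.
- by move=> e; rewrite eqxx.
- by move=> a i j -> ->; rewrite !eqxx.
- by move=> a i j ->; rewrite !eqxx.
- by move=> a b i j -> -> ->; rewrite !eqxx orbT.
Qed.

Lemma adjE x y : adj x y <-> E x y \/ E y x.
Proof.
rewrite /Hslm_adj; split.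
  by case/orP => /Hgen_E; [left|right].
by case=> /E_Hgen ->; rewrite ?orbT.
Qed.

Lemma adj_sym x y : adj x y -> adj y x.
Proof. by rewrite /Hslm_adj orbC. Qed.


Lemma N_gt0 : 0 < N.
Proof. rewrite subn_gt0 -{1}(expn0 2) ltn_exp2l //. Qed.

Lemma k_gt0 : 0 < k.
Proof. by rewrite expn_gt0. Qed.

Lemma expsE : 2 ^ s = k + k.
Proof. by rewrite -{1}(prednK Hs) expnS mul2n -addnn subn1. Qed.

Lemma NE : N = (k + k + k + k).-1.
Proof. rewrite expnS expsE; lia. Qed.

Definition oN i : 'I_N := insubd (Ordinal N_gt0) i.
Definition oL d : 'I_(l - 1) := insubd (Ordinal l1_gt0) d.
Definition oM j : 'I_m := insubd (Ordinal Hm) j.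

Lemma val_oN i : i < N -> val (oN i) = i.
Proof. by rewrite val_insubd => ->. Qed.
Lemma val_oL i : i < l - 1 -> val (oL i) = i.
Proof. by rewrite val_insubd => ->. Qed.
Lemma val_oM i : i < m -> val (oM i) = i.
Proof. by rewrite val_insubd => ->. Qed.

Lemma oN_id (i : 'I_N) : oN i = i.
Proof. by apply: val_inj; rewrite val_oN. Qed.
Lemma oL_id (i : 'I_(l-1)) : oL i = i.
Proof. by apply: val_inj; rewrite val_oL. Qed.
Lemma oM_id (i : 'I_m) : oM i = i.
Proof. by apply: val_inj; rewrite val_oM. Qed.

Lemma oN_eq (i : 'I_N) (x : nat) : x = i -> oN x = i.
Proof. by move=> ->; exact: oN_id. Qed.
Lemma oL_eq (i : 'I_(l-1)) (x : nat) : x = i -> oL x = i.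
Proof. by move=> ->; exact: oL_id. Qed.
Lemma oM_eq (i : 'I_m) (x : nat) : x = i -> oM x = i.
Proof. by move=> ->; exact: oM_id. Qed.

Definition leafout (e : arcT arc) := 2 ^ s - 1 + k + pout e.
Definition leafin (e : arcT arc) := 2 ^ s - 1 + pin e.

Ltac ordeq := first [apply: oN_eq | apply: oL_eq | apply: oM_eq | symmetry; first [apply: oN_eq | apply: oL_eq | apply: oM_eq]]; try unfold leafin; try unfold leafout; lia.
Lemma leafout_lt e : leafout e < N.
Proof. have := ltn_ord (pout e); rewrite /leafout NE expsE; lia. Qed.
Lemma leafin_lt e : leafin e < N.
Proof. have := ltn_ord (pin e); rewrite /leafin NE expsE; lia. Qed.

Definition hd (i : nat) := trunc_log 2 i.+1.

Lemma hd_leaf i : 2 ^ s - 1 <= i -> i < N -> hd i = s.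
Proof.
move=> H1 H2; apply: trunc_log_eq => //.
have := expn_gt0 2 s; rewrite expnS in H2 *; lia.
Qed.

Lemma hd_par i : 0 < i -> hd (i.-1./2) = (hd i).-1.
Proof.
move=> Hi; rewrite /hd (@trunc_log2S i.+1); last by lia.
by have -> : (i.-1./2).+1 = i.+1./2 by lia.
Qed.

Lemma hd0 i : hd i = 0 -> i = 0.
Proof.
move=> H; have := trunc_log_gt0 2 i.+1; rewrite -/(hd i) H /=.
case: i {H} => //.
Qed.

Definition idx (a : V) : nat := if [pick i | sigma i == a] is Some i then val i else 0.

Lemma idxP a : exists2 i : 'I_n, sigma i = a & val i = idx a.
Proof.
have /codomP [i Hi] := inj_card_onto Hsig (eq_leq (esym (card_ord n))) a.
rewrite /idx; case: pickP => [j /eqP Hj|H]; first by exists j.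
by have := H i; rewrite -Hi eqxx.
Qed.

Lemma idx_lt a : idx a < n.
Proof. by have [i _ <-] := idxP a; exact: ltn_ord. Qed.

Lemma idx_sigma i : idx (sigma i) = i.
Proof. by have [j /Hsig -> <-] := idxP (sigma i). Qed.

Lemma idx_inj a b : idx a = idx b -> a = b.
Proof.
have [i <- <-] := idxP a; have [j <- <-] := idxP b.
by move/val_inj ->.
Qed.

Definition vtx (i : nat) : V := if insub i is Some o then sigma o else a0.

Lemma vtx_idx a : vtx (idx a) = a.
Proof.
have [i <- <-] := idxP a.
by rewrite /vtx valK.
Qed.

Lemma idx_vtx i : i < n -> idx (vtx i) = i.
Proof. by move=> Hi; rewrite /vtx insubT idx_sigma. Qed.

Lemma cyc_nextE a b : cyc_next sigma a b = (idx b == (idx a).+1 %% n).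
Proof.
apply/idP/idP.
  case/existsP => i /existsP [j /and3P[/eqP <- /eqP <- /eqP H]].
  by rewrite !idx_sigma H.
move/eqP=> H; apply/existsP; have [i Hi Hi'] := idxP a; exists i.
apply/existsP; have [j Hj Hj'] := idxP b; exists j.
by rewrite Hi Hj Hi' Hj' H !eqxx.
Qed.

Lemma n_gt0 : 0 < n.
Proof. by apply/card_gt0P; exists a0. Qed.


Definition f1 (x : G) : G :=
  match x with
  | inl (a, _, i) => Tr a false i
  | inr (inr (inl (e, _, t, d))) => Si e false t d
  | _ => x
  end.

Lemma f1_E x y : E x y -> E (f1 x) (f1 y).
Proof.
case=> /=.
- by move=> *; apply: E_tree.
- by move=> *; apply: E_leaf.
- by move=> *; apply: E_side.
- by move=> *; apply: E_sm.
- by move=> *; apply: E_mid.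
- by move=> *; apply: E_rq.
- by move=> *; apply: E_qq.
- by move=> *; apply: E_cyc.
Qed.

Lemma f1_adj x y : adj x y -> adj (f1 x) (f1 y).
Proof. by move/adjE => [] /f1_E H; apply/adjE; [left|right]. Qed.

Lemma f1_nbc x y : nbc adj x y -> nbc adj (f1 x) (f1 y).
Proof. by case/orP => [/eqP ->|/f1_adj H]; rewrite /nbc ?eqxx ?H ?orbT. Qed.

Definition par1 (x : G) : G :=
  match x with
  | inl (a, c, i) => if c then x else if nat_of_ord i is i'.+1 then Tr a false (oN i'./2) else Qu a (oM 0)
  | inr (inl (e, t)) => if t then Mi e false else Si e false false (oL (l - 2))
  | inr (inr (inl (e, c, t, d))) =>
      if c then (if ~~ t && (nat_of_ord d == l - 2) then Mi e false else x)
      else if t then (if nat_of_ord d == l - 2 then Mi e true else Si e false true (oL (nat_of_ord d).+1))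
      else (if nat_of_ord d is d'.+1 then Si e false false (oL d') else Tr (val e).1 false (oN (leafout e)))
  | inr (inr (inr (a, j))) => if nat_of_ord j < m - 1 then Qu a (oM (nat_of_ord j).+1)
      else if idx a is i.+1 then Qu (vtx i) j else x
  end.

Definition dep1 (x : G) : nat :=
  match x with
  | inl (a, c, i) => idx a + m + hd i
  | inr (inl (e, t)) => idx (val e).1 + m + s + l + (if t then 1 else 0)
  | inr (inr (inl (e, c, t, d))) =>
      if c then idx (val e).1 + m + s + l + 1
      else if t then idx (val e).1 + m + s + l + 1 + (l - 1 - nat_of_ord d)
      else idx (val e).1 + m + s + nat_of_ord d + 1
  | inr (inr (inr (a, j))) => idx a + (m - 1 - nat_of_ord j)
  end.

Definition inK : pred G := fun x =>
  match x with inl (_, c, _) => ~~ c | inr (inr (inr _)) => true | _ => false end.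

Definition D1 : pred G := fun x =>
  match x with
  | inl (_, c, _) => ~~ c
  | inr (inl _) => true
  | inr (inr (inl (_, c, t, d))) => ~~ c || (~~ t && (nat_of_ord d == l - 2))
  | inr (inr (inr _)) => true
  end.

Definition q0 : G := Qu (vtx 0) (oM (m - 1)).

Lemma inK_D1 x : x \in inK -> x \in D1.
Proof. by case: x => [[[a c] i]|[[e t]|[[[[e c] t] d]|[a j]]]]. Qed.

Lemma adj_l x y : E x y -> adj x y.
Proof. by move=> H; apply/adjE; left. Qed.
Lemma adj_r x y : E y x -> adj x y.
Proof. by move=> H; apply/adjE; right. Qed.

Lemma Htree1 x : x \in D1 -> 0 < dep1 x ->
  [/\ par1 x \in D1, dep1 (par1 x) = (dep1 x).-1 & adj x (par1 x)].
Proof.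
case: x => [[[a [|]] i]|[[e [|]]|[[[[e [|]] [|]] d]|[a j]]]] //=; rewrite /in_mem /=.
- case: i => [[|i] Hi] /= _ Hd.
    split => //; first by rewrite val_oM //; rewrite /hd /= trunc_log1; lia.
    by apply: adj_l; apply: E_rq => //; rewrite val_oM.
  have Hi' : i./2 < N by lia.
  split => //.
    rewrite val_oN //.
    have -> : hd (i./2) = (hd i.+1).-1 by exact: (hd_par (ltn0Sn i)).
    have : 0 < hd i.+1 by rewrite /hd trunc_log_gt0.
    lia.
  apply: adj_r; apply: (@E_tree a false (oN i./2) (Ordinal Hi)); rewrite /= val_oN //; lia.
- move=> _ _; split => //; first by rewrite /=; lia.
  exact: adj_r (E_mid e).
- move=> _ _; split => //; first by rewrite /= val_oL; lia.
  by apply: adj_r; apply: E_sm; rewrite val_oL //; lia.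
- case: eqP => // Hd _ _ /=; split => //; first by rewrite /=; lia.
  by apply: adj_l; apply: E_sm.
- case: eqP => [Hd|Hd] _ _ /=.
    split => //; first by rewrite /=; lia.
    by apply: adj_l; apply: E_sm.
  have Hd' : (nat_of_ord d).+1 < l - 1 by have := ltn_ord d; lia.
  split => //; first by rewrite /= val_oL //; lia.
  by apply: adj_l; apply: E_side; rewrite val_oL.
- case: d => [[|d] Hd] /= _ _.
    split => //; first by rewrite val_oN ?leafout_lt // hd_leaf ?leafout_lt //; rewrite /leafout; lia.
    apply: adj_r; apply: E_leaf => //.
    by rewrite /leaf_ok /= val_oN ?leafout_lt // !eqxx.
  have Hd' : d < l - 1 by lia.
  split => //; first by rewrite /= val_oL //; lia.
  by apply: adj_r; apply: (@E_side e false false (oL d) (Ordinal Hd)); rewrite /= val_oL.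
- case: ifP => [Hj|Hj].
    move=> _ _; split => //; first by rewrite /= val_oM //; lia.
    by apply: adj_l; apply: E_qq; rewrite val_oM //; lia.
  have Hj' : nat_of_ord j = m - 1 by have := ltn_ord j; move/negbT: Hj; lia.
  have := idx_lt a; case E1: (idx a) => [|i] Hi _; first by rewrite Hj'; lia.
  move=> _; split => //.
    rewrite /= idx_vtx; lia.
  apply: adj_r; apply: E_cyc => //.
  rewrite cyc_nextE idx_vtx ?E1 ?modn_small //; lia.
Qed.

Lemma par1_K x : x \in inK -> par1 x \in inK.
Proof.
case: x => [[[a [|]] i]|[[e t]|[[[[e c] t] d]|[a j]]]] //=; rewrite /in_mem /=.
  by case: i => [[|i] Hi].
by case: ifP => // _; case: (idx a).
Qed.

Lemma dep1_0 x : x \in D1 -> dep1 x = 0 -> x = q0.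
Proof.
case: x => [[[a [|]] i]|[[e [|]]|[[[[e [|]] [|]] d]|[a j]]]] //=; try lia.
move=> _ H.
have H1 : idx a = 0 by lia.
have H2 : nat_of_ord j = m - 1 by have := ltn_ord j; lia.
have Ha : vtx 0 = a by rewrite -H1 vtx_idx.
have Hj : oM (m - 1) = j.
  apply: val_inj; rewrite val_oM; last by lia.
  by rewrite /= H2.
by rewrite /q0 Ha Hj.
Qed.


Lemma HtreeK x : x \in inK -> 0 < dep1 x ->
  [/\ par1 x \in inK, dep1 (par1 x) = (dep1 x).-1 & adj x (par1 x)].
Proof.
move=> HK Hd; have [_ H2 H3] := Htree1 (inK_D1 HK) Hd.
by split => //; apply: par1_K.
Qed.

Lemma rtK x : x \in inK -> rt par1 dep1 x = q0.
Proof.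
move=> HK; have [H1 H2] := iter_D HtreeK HK (leqnn (dep1 x)).
by apply: dep1_0; [apply: inK_D1 | rewrite H2 subnn].
Qed.

Lemma rt1 x : x \in D1 -> rt par1 dep1 x = q0.
Proof.
move=> HD; have [H1 H2] := iter_D Htree1 HD (leqnn (dep1 x)).
by apply: dep1_0; rewrite // H2 subnn.
Qed.

Lemma q0_K : q0 \in inK.
Proof. by []. Qed.

Lemma nbc_adj x y : adj x y -> nbc adj x y.
Proof. by rewrite /nbc => ->; rewrite orbT. Qed.

Definition xe (e : arcT arc) : G := Tr (val e).1 false (oN (leafout e)).
Definition ye (e : arcT arc) : G := Tr (val e).2 false (oN (leafin e)).

Definition walk e p : G :=
  if p <= dep1 (xe e) then iter p par1 (xe e)
  else iter (dep1 (xe e) + dep1 (ye e) - p) par1 (ye e).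

Lemma xe_K e : xe e \in inK. Proof. by []. Qed.
Lemma ye_K e : ye e \in inK. Proof. by []. Qed.

Lemma dep_xe e : dep1 (xe e) = idx (val e).1 + m + s.
Proof. by rewrite /= val_oN ?leafout_lt // hd_leaf ?leafout_lt //; rewrite /leafout; lia. Qed.
Lemma dep_ye e : dep1 (ye e) = idx (val e).2 + m + s.
Proof. by rewrite /= val_oN ?leafin_lt // hd_leaf ?leafin_lt //; rewrite /leafin; lia. Qed.

Lemma dxy e : dep1 (xe e) + dep1 (ye e) < l.*2.
Proof. rewrite dep_xe dep_ye; have := idx_lt (val e).1; have := idx_lt (val e).2; lia. Qed.

Lemma walk_K e p : walk e p \in inK.
Proof.
rewrite /walk; case: ifP => H.
  by case: (iter_D HtreeK (xe_K e) H).
have Hj : dep1 (xe e) + dep1 (ye e) - p <= dep1 (ye e) by move/negbT: H; lia.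
by case: (iter_D HtreeK (ye_K e) Hj).
Qed.

Lemma walk0 e : walk e 0 = xe e.
Proof. by []. Qed.

Lemma walk_end e p : dep1 (xe e) + dep1 (ye e) <= p -> walk e p = ye e.
Proof.
move=> H; rewrite /walk; case: ifP => H2.
  have H3 : dep1 (ye e) = 0 by lia.
  have H4 : p = dep1 (xe e) by lia.
  rewrite H4 -/(rt par1 dep1 (xe e)) rtK //.
  by rewrite (dep1_0 (inK_D1 (ye_K e)) H3).
by have -> : dep1 (xe e) + dep1 (ye e) - p = 0 by lia.
Qed.

Lemma iter_adj x j : x \in inK -> j < dep1 x -> adj (iter j par1 x) (iter j.+1 par1 x).
Proof.
move=> HK Hj; have [H1 H2] := iter_D HtreeK HK (ltnW Hj).
have [_ _ H3] := HtreeK H1 ltac:(rewrite H2 subn_gt0 //).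
by rewrite iterS.
Qed.

Lemma walk_step e p : nbc adj (walk e p) (walk e p.+1).
Proof.
rewrite /walk; case: (ltngtP p (dep1 (xe e))) => H.
- have H1 : p <= dep1 (xe e) by lia.
  have H2 : p.+1 <= dep1 (xe e) by lia.
  rewrite ?H1 ?H2; apply: nbc_adj; apply: iter_adj => //; lia.
- have H1 : (p <= dep1 (xe e)) = false by lia.
  have H2 : (p.+1 <= dep1 (xe e)) = false by lia.
  rewrite ?H1 ?H2.
  case: (ltnP (dep1 (xe e) + dep1 (ye e) - p) 1) => H3.
    have E1 : dep1 (xe e) + dep1 (ye e) - p = 0 by lia.
    have E2 : dep1 (xe e) + dep1 (ye e) - p.+1 = 0 by lia.
    by rewrite E1 E2 nbc_refl.
  have E1 : dep1 (xe e) + dep1 (ye e) - p = (dep1 (xe e) + dep1 (ye e) - p.+1).+1 by lia.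
  rewrite E1; apply: nbc_sym; first exact: adj_sym.
  apply: nbc_adj; apply: iter_adj => //; lia.
- have H1 : p <= dep1 (xe e) by lia.
  have H2 : (p.+1 <= dep1 (xe e)) = false by lia.
  rewrite ?H1 ?H2 ?H.
  rewrite -/(rt par1 dep1 (xe e)) rtK //.
  have -> : dep1 (xe e) + dep1 (ye e) - (dep1 (xe e)).+1 = (dep1 (ye e)).-1 by lia.
  case E1: (dep1 (ye e)) => [|d] /=.
    by rewrite (dep1_0 (inK_D1 (ye_K e)) E1) nbc_refl.
  have Hd : d < dep1 (ye e) by lia.
  have := iter_adj (ye_K e) Hd; rewrite -E1 -/(rt par1 dep1 (ye e)) rtK // => Ha.
  by apply: nbc_sym; [exact: adj_sym | apply: nbc_adj].
Qed.


Definition rho2 (x : G) : G :=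
  match x with
  | inr (inl (e, t)) => walk e (l + (if t then 1 else 0))
  | inr (inr (inl (e, c, t, d))) => if t then walk e (l.*2 - d) else walk e (nat_of_ord d).+1
  | _ => x
  end.

Definition sg (x : G) : G := rho2 (f1 x).

Lemma sg_K x : sg x \in inK.
Proof.
case: x => [[[a c] i]|[[e t]|[[[[e c] t] d]|[a j]]]] //=; try exact: walk_K.
by case: t; apply: walk_K.
Qed.

Lemma sg_id x : x \in inK -> sg x = x.
Proof. by case: x => [[[a [|]] i]|[[e t]|[[[[e c] t] d]|[a j]]]]. Qed.

Lemma nbc_symE x y : nbc adj x y -> nbc adj y x.
Proof. by apply: nbc_sym; exact: adj_sym. Qed.

Lemma sg_E x y : E x y -> nbc adj (sg x) (sg y).
Proof.
case.
- by move=> a c i j Hij; apply: nbc_adj; apply: adj_l; apply: E_tree.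
- move=> a c i e [|] d Hd; rewrite /leaf_ok => /andP[/eqP Ha /eqP Hi].
    change (nbc adj (Tr a false i) (walk e (l.*2 - d))); rewrite Hd.
    have -> : Tr a false i = ye e.
      by rewrite /ye -Ha; congr Tr; apply: val_inj; rewrite val_oN ?leafin_lt.
    rewrite -(@walk_end e l.*2.+1); last by have := dxy e; lia.
    by rewrite subn0; apply: nbc_symE; apply: walk_step.
  change (nbc adj (Tr a false i) (walk e d.+1)); rewrite Hd.
  have -> : Tr a false i = xe e.
    by rewrite /xe -Ha; congr Tr; apply: val_inj; rewrite val_oN ?leafout_lt.
  by rewrite -walk0; apply: walk_step.
- move=> e c [|] d d' Hd.
    change (nbc adj (walk e (l.*2 - d)) (walk e (l.*2 - d'))); rewrite Hd.
    have -> : l.*2 - d = (l.*2 - d.+1).+1 by have := ltn_ord d'; lia.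
    by apply: nbc_symE; apply: walk_step.
  change (nbc adj (walk e d.+1) (walk e d'.+1)); rewrite Hd.
  exact: walk_step.
- move=> e c [|] d Hd.
    change (nbc adj (walk e (l.*2 - d)) (walk e (l + 1))); rewrite Hd.
    have -> : l.*2 - (l - 2) = (l + 1).+1 by lia.
    by apply: nbc_symE; apply: walk_step.
  change (nbc adj (walk e d.+1) (walk e (l + 0))); rewrite Hd.
  have -> : l + 0 = (l - 2).+1.+1 by lia.
  by apply: walk_step.
- move=> e; change (nbc adj (walk e (l + 0)) (walk e (l + 1))).
  rewrite addn0 addn1; exact: walk_step.
- by move=> a i j Hi Hj; apply: nbc_adj; apply: adj_l; apply: E_rq.
- by move=> a i j Hij; apply: nbc_adj; apply: adj_l; apply: E_qq.
- by move=> a b i j Hi Hj Hc; apply: nbc_adj; apply: adj_l; apply: E_cyc.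
Qed.

Lemma sg_nbc x y : nbc adj x y -> nbc adj (sg x) (sg y).
Proof.
case/orP => [/eqP ->|/adjE [H|H]]; first exact: nbc_refl.
  exact: sg_E.
by apply: nbc_symE; apply: sg_E.
Qed.

Lemma K_tm u v : u \in inK -> v \in inK -> E u v -> tm par1 dep1 u v \/ v = q0.
Proof.
move=> Hu Hv HE; case: HE Hu Hv => //.
- move=> a [|] i j Hij //= _ _; left.
  have Hj : 0 < j by lia.
  apply/or3P; apply: Or33; apply/andP; split.
    by rewrite /=; lia.
  apply/eqP; rewrite /=; case: j Hij Hj => [[|j] Hj] //= Hij _.
  congr Tr; apply: val_inj; rewrite val_oN /=; lia.
- move=> a i j Hi Hj _ _; left; apply/or3P; apply: Or32; apply/andP; split.
    by rewrite /= Hi; lia.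
  apply/eqP; rewrite /= Hi; congr Qu; apply: val_inj; rewrite val_oM /=; lia.
- move=> a i j Hij _ _; left; apply/or3P; apply: Or32; apply/andP; split.
    by rewrite /=; have := ltn_ord j; lia.
  have Hi : i < m - 1 by have := ltn_ord j; lia.
  apply/eqP; rewrite /= Hi; congr Qu; apply: val_inj; rewrite val_oM /=; lia.
- move=> a b i j Hi Hj; rewrite cyc_nextE => /eqP Hc _ _.
  have Ha := idx_lt a.
  case: (ltnP (idx a).+1 n) => Hlt.
    rewrite modn_small // in Hc; left; apply/or3P; apply: Or33; apply/andP; split.
      by rewrite /= Hc.
    have Hj' : (j < m - 1) = false by lia.
    by apply/eqP; rewrite /= Hj' Hc vtx_idx; congr Qu; apply: val_inj; rewrite /= Hi Hj.
  have Hn : (idx a).+1 = n by lia.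
  rewrite Hn modnn in Hc; right.
  by apply: dep1_0 => //=; rewrite Hc Hj subnn.
Qed.


Lemma rho2_id y : y \in inK -> rho2 y = y.
Proof. by case: y => [[[a [|]] i]|[[e t]|[[[[e c] t] d]|[a j]]]]. Qed.

Definition c1 : pred G := fun x =>
  match x with
  | inl (_, c, _) => ~~ c
  | inr (inr (inl (_, c, _, _))) => ~~ c
  | _ => true
  end.

Lemma f1_c1 x : f1 x \in c1.
Proof. by case: x => [[[a c] i]|[[e t]|[[[[e c] t] d]|[a j]]]]. Qed.

Lemma f1_D1 x : f1 x \in D1.
Proof. by case: x => [[[a c] i]|[[e t]|[[[[e c] t] d]|[a j]]]]. Qed.

Lemma R_tm u v : u \in c1 -> v \in c1 -> u \notin inK -> v \notin inK -> E u v ->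
  tm par1 dep1 u v.
Proof.
move=> Hu Hv Hu' Hv' HE; case: HE Hu Hv Hu' Hv'.
- by move=> a [|] i j _.
- by move=> a [|] i e t d _ _.
- move=> e [|] [|] d d' Hd //= _ _ _ _.
    apply/or3P; apply: Or32; apply/andP; split; first by rewrite /=; lia.
    have Hne : (nat_of_ord d == l - 2) = false by have := ltn_ord d'; lia.
    apply/eqP; rewrite /= Hne; congr Si; ordeq.
  apply/or3P; apply: Or33; apply/andP; split; first by rewrite /=; lia.
  apply/eqP; rewrite /=; case: d' Hd => [[|d'] Hd'] //= Hd.
  congr Si; ordeq.
- move=> e [|] [|] d Hd //= _ _ _ _.
    apply/or3P; apply: Or32; apply/andP; split; first by rewrite /=; lia.
    by apply/eqP; rewrite /= Hd eqxx.
  apply/or3P; apply: Or33; apply/andP; split; first by rewrite /=; lia.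
  by apply/eqP; rewrite /=; congr Si; ordeq.
- move=> e _ _ _ _.
  by apply/or3P; apply: Or33; apply/andP; split; first by rewrite /=; lia.
- by [].
- by [].
- by [].
Qed.

Definition DF : pred G := fun x =>
  match x with
  | inl (_, c, _) => c
  | inr (inr (inl (_, c, _, _))) => c
  | _ => false
  end.

Definition spider (x : G) : V :=
  match x with
  | inl (a, _, _) => a
  | inr (inr (inl (e, _, t, _))) => if t then (val e).2 else (val e).1
  | _ => a0
  end.

Definition parF (x : G) : G :=
  match x with
  | inl (a, c, i) => if nat_of_ord i is i'.+1 then Tr a c (oN i'./2) else x
  | inr (inr (inl (e, c, t, d))) => if nat_of_ord d is d'.+1 then Si e c t (oL d')
      else Tr (if t then (val e).2 else (val e).1) c (oN (if t then leafin e else leafout e))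
  | _ => x
  end.

Definition depF (x : G) : nat :=
  match x with
  | inl (_, _, i) => hd i
  | inr (inr (inl (_, _, _, d))) => s + nat_of_ord d + 1
  | _ => 0
  end.

Lemma HtreeF x : x \in DF -> 0 < depF x ->
  [/\ parF x \in DF, depF (parF x) = (depF x).-1 & adj x (parF x)].
Proof.
case: x => [[[a [|]] i]|[[e t]|[[[[e [|]] t] d]|[a j]]]] //=; rewrite /in_mem /=.
- case: i => [[|i] Hi] /= _ Hd; first by move: Hd; rewrite /hd /= trunc_log1.
  have Hi' : i./2 < N by lia.
  split => //.
    rewrite /= val_oN //.
    exact: (hd_par (ltn0Sn i)).
  apply: adj_r; apply: (@E_tree a true (oN i./2) (Ordinal Hi)); rewrite /= val_oN //; lia.
- case: d => [[|d] Hd] /= _ _.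
    split => //.
      rewrite /= val_oN; last by case: t; [apply: leafin_lt | apply: leafout_lt].
      case: t; rewrite hd_leaf ?leafin_lt ?leafout_lt //; rewrite /leafin /leafout; lia.
    apply: adj_r; apply: E_leaf => //.
    rewrite /leaf_ok; case: t; rewrite /= val_oN ?leafin_lt ?leafout_lt // !eqxx //.
  have Hd' : d < l - 1 by lia.
  split => //; first by rewrite /= val_oL //; lia.
  by apply: adj_r; apply: (@E_side e true t (oL d) (Ordinal Hd)); rewrite /= val_oL.
Qed.

Lemma spider_par x : x \in DF -> spider (parF x) = spider x.
Proof.
case: x => [[[a [|]] i]|[[e t]|[[[[e [|]] t] d]|[a j]]]] //= _.
  by case: (nat_of_ord i).
by case: (nat_of_ord d).
Qed.



Lemma spider_iter x j : x \in DF -> j <= depF x -> spider (iter j parF x) = spider x.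
Proof.
move=> Hx; elim: j => [|j IH] Hj //.
have [H1 H2] := iter_D HtreeF Hx (ltnW Hj).
by rewrite iterS spider_par // IH // ltnW.
Qed.

Lemma depF0 x : x \in DF -> depF x = 0 -> x = Tr (spider x) true (oN 0).
Proof.
case: x => [[[a [|]] i]|[[e t]|[[[[e [|]] t] d]|[a j]]]] //=; last by lia.
move=> _ /hd0 Hi; congr Tr; symmetry; ordeq.
Qed.

Lemma rtF x : x \in DF -> rt parF depF x = Tr (spider x) true (oN 0).
Proof.
move=> Hx; have [H1 H2] := iter_D HtreeF Hx (leqnn (depF x)).
rewrite /rt (depF0 H1); last by rewrite H2 subnn.
by rewrite spider_iter.
Qed.

Lemma tm_refl (par : G -> G) dep u : tm par dep u u.
Proof. by rewrite /tm eqxx. Qed.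

Lemma tm_sym (par : G -> G) dep u v : tm par dep u v -> tm par dep v u.
Proof.
rewrite /tm => /or3P[/eqP->|H|H]; first by rewrite eqxx.
  by rewrite H !orbT.
by rewrite H orbT.
Qed.

Lemma F_tm u v : u \in DF -> E u v \/ E v u ->
  (v \in DF /\ spider v = spider u /\ tm parF depF u v) \/ f1 v = v.
Proof.
move=> Hu [HE|HE].
- case: HE Hu => //.
  + move=> a [|] i j Hij //= _; left; split => //; split => //.
    have Hj : 0 < j by lia.
    apply/or3P; apply: Or33; apply/andP; split.
      by rewrite /=; case: (nat_of_ord j) Hj => //= ? _; rewrite /hd trunc_log_gt0.
    apply/eqP; rewrite /=; case: j Hij Hj => [[|j] Hj] //= Hij _.
    congr Tr; symmetry; ordeq.
  + move=> a [|] i e t d Hd //=; rewrite /leaf_ok => Hlf _; left.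
    split => //; split.
      by case: t Hlf => /andP[/eqP-> _].
    apply/or3P; apply: Or33; apply/andP; split; first by rewrite /=; lia.
    apply/eqP; rewrite /= Hd.
    by case: t Hlf => /andP[/eqP-> /eqP Hi]; congr Tr; ordeq.
  + move=> e [|] t d d' Hd //= _; left; split => //; split => //.
    apply/or3P; apply: Or33; apply/andP; split; first by rewrite /=; lia.
    apply/eqP; rewrite /=; case: d' Hd => [[|d'] Hd'] //= Hd.
    congr Si; ordeq.
  + by move=> e c t d _ _; right.
- case: HE Hu => //.
  + move=> a [|] i j Hij //= _; left; split => //; split => //.
    have Hj : 0 < j by lia.
    apply/or3P; apply: Or32; apply/andP; split.
      by rewrite /=; case: (nat_of_ord j) Hj => //= ? _; rewrite /hd trunc_log_gt0.
    apply/eqP; rewrite /=; case: j Hij Hj => [[|j] Hj] //= Hij _.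
    congr Tr; ordeq.
  + move=> a [|] i e t d Hd //=; rewrite /leaf_ok => Hlf _; left.
    split => //; split.
      by case: t Hlf => /andP[/eqP-> _].
    apply/or3P; apply: Or32; apply/andP; split; first by rewrite /=; lia.
    apply/eqP; rewrite /= Hd.
    by case: t Hlf => /andP[/eqP-> /eqP Hi]; congr Tr; symmetry; ordeq.
  + move=> e [|] t d d' Hd //= _; left; split => //; split => //.
    apply/or3P; apply: Or32; apply/andP; split; first by rewrite /=; lia.
    apply/eqP; rewrite /= Hd.
    congr Si; symmetry; ordeq.
Qed.

Lemma f1_notDF x : f1 x \notin DF.
Proof. by case: x => [[[a c] i]|[[e t]|[[[[e c] t] d]|[a j]]]]. Qed.

Lemma f1_fix x : x \notin DF -> f1 x = x.
Proof. by case: x => [[[a [|]] i]|[[e t]|[[[[e [|]] t] d]|[a j]]]]. Qed.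


Definition tgt (a : V) : G :=
  if [pick e : arcT arc | (val e).1 == a] is Some e then Si e true false (oL (l - 2)) else q0.

Lemma tgtP a : exists e, (val e).1 = a /\ tgt a = Si e true false (oL (l - 2)).
Proof.
rewrite /tgt; case: pickP => [e /eqP He|H]; first by exists e.
by have [e He] := Hout a; have := H e; rewrite He eqxx.
Qed.

Lemma tgt_DF a : tgt a \in DF.
Proof. by have [e [_ ->]] := tgtP a. Qed.

Lemma tgt_D1 a : tgt a \in D1.
Proof. have [e [_ ->]] := tgtP a; rewrite /in_mem /= val_oL //=; lia. Qed.

Lemma spider_tgt a : spider (tgt a) = a.
Proof. by have [e [He ->]] := tgtP a. Qed.

Lemma ffun2 (X Y : 'I_2) (a b : G) : X != Y ->
  [ffun i => if i == X then a else b] X = a /\ [ffun i => if i == X then a else b] Y = b.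
Proof. by move=> H; rewrite !ffunE eqxx eq_sym (negbTE H). Qed.

Lemma move2 (C : {ffun 'I_2 -> G}) (X Y : 'I_2) a b : X != Y ->
  nbc adj (C X) a -> nbc adj (C Y) b ->
  forall i, nbc adj (C i) ([ffun i => if i == X then a else b] i).
Proof.
move=> H Ha Hb i; rewrite ffunE; case: eqP => [->//|/eqP Hi].
by rewrite (other2 H Hi).
Qed.

Lemma P3c (C : {ffun 'I_2 -> G}) r (X Y : 'I_2) : X != Y -> r \in DF -> C Y \in DF ->
  nbc adj (C X) (f1 r) -> rt parF depF (C Y) = rt parF depF r -> cops_win adj C r.
Proof.
move=> HXY Hr HY HX Hrt.
apply: (hunt adj_sym HtreeF (iG := X) (iH := Y) (Ir := fun r => r \in DF) (h := id) (gp := f1)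
  (Gd := predT)) => //.
- by move=> r1 r2 _; exact: f1_nbc.
- move=> r1 r2 H1 _ /orP[/eqP <-|/adjE Ha].
    by apply: Or33; split => //; exact: tm_refl.
  case: (F_tm H1 Ha) => [[H2 [_ H3]]|H2].
    by apply: Or33.
  exact: Or31.
- by move=> C' r' _ _ Hn Heq; rewrite Heq in Hn; exact: catch_nbc Hn.
- by move=> C' r' _ _ _ _ Hn; exact: catch_nbc Hn.
Qed.

Lemma P3b (C : {ffun 'I_2 -> G}) r (X Y : 'I_2) : X != Y -> r \in DF ->
  nbc adj (C X) (f1 r) -> nbc adj (C Y) (tgt (spider r)) -> cops_win adj C r.
Proof.
move=> HXY Hr HX HY.
have [H1 H2] := ffun2 (f1 r) (tgt (spider r)) HXY.
apply: (CW_move (move2 HXY HX HY)); right => r' Hrr'.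
case: (eqVneq r' (tgt (spider r))) => Ht.
  by apply: CW_caught; apply/existsP; exists Y; rewrite H2 Ht.
case/orP: Hrr' => [/eqP <-|/adjE Ha].
  apply: (P3c HXY Hr); rewrite ?H1 ?H2 ?tgt_DF ?nbc_refl //.
  by rewrite !rtF ?tgt_DF // spider_tgt.
have Hadj : adj r r' by apply/adjE.
case: (F_tm Hr Ha) => [[Hr' [Hsp _]]|Hf].
  apply: (P3c HXY Hr'); rewrite ?H1 ?H2 ?tgt_DF //.
    by apply: f1_nbc; rewrite /nbc Hadj orbT.
  by rewrite !rtF ?tgt_DF // spider_tgt Hsp.
by apply: (catch_nbc (i := X)); rewrite H1 -Hf; apply: f1_nbc; rewrite /nbc Hadj orbT.
Qed.

Lemma P3 (C : {ffun 'I_2 -> G}) r (X Y : 'I_2) : X != Y ->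
  nbc adj (C X) (f1 r) -> C X \in D1 -> C Y \in D1 -> cops_win adj C r.
Proof.
move=> HXY HX HXD HYD.
case: (boolP (r \in DF)) => Hr; last by rewrite f1_fix // in HX; exact: catch_nbc HX.
apply: (hunt adj_sym Htree1 (iG := X) (iH := Y) (Ir := fun r => r \in DF)
  (h := fun r => tgt (spider r)) (gp := f1) (Gd := D1)) => //.
- by move=> r1 r2 _; exact: f1_nbc.
- by move=> r1 _; exact: tgt_D1.
- by move=> r1 _; exact: f1_D1.
- move=> r1 r2 H1 _ /orP[/eqP <-|/adjE Ha].
    by apply: Or33; split => //; exact: tm_refl.
  case: (F_tm H1 Ha) => [[H2 [H3 _]]|H2].
    by apply: Or33; split => //; rewrite H3; exact: tm_refl.
  exact: Or31.
- move=> C' r' _ _ _ Heq; exfalso.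
  by have := f1_notDF r'; rewrite Heq tgt_DF.
- by move=> C' r' Hr' _ _ Hg Hh; exact: (P3b HXY Hr' Hg Hh).
- by rewrite !rt1 // tgt_D1.
Qed.


Lemma P2 (C : {ffun 'I_2 -> G}) r (X Y : 'I_2) : X != Y ->
  nbc adj (C X) (sg r) -> C X \in inK -> C Y \in D1 -> cops_win adj C r.
Proof.
move=> HXY HX HXK HYD.
have HYX : Y != X by rewrite eq_sym.
apply: (hunt adj_sym Htree1 (iG := X) (iH := Y) (Ir := fun _ => True)
  (h := f1) (gp := sg) (Gd := inK)) => //.
- by move=> r1 r2 _; exact: sg_nbc.
- by move=> r1 _; exact: f1_D1.
- by move=> r1 _; exact: sg_K.
- move=> r1 r2 _ Hne Hn.
  case: (boolP (f1 r2 \in inK)) => HK2.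
    by apply: Or32; rewrite /sg rho2_id.
  have HK1 : f1 r1 \notin inK.
    by apply/negP => HK1; apply: Hne; rewrite /sg rho2_id.
  apply: Or33; split => //.
  case/orP: (f1_nbc Hn) => [/eqP ->|/adjE [H|H]]; first exact: tm_refl.
    exact: R_tm (f1_c1 _) (f1_c1 _) HK1 HK2 H.
  by apply: tm_sym; exact: R_tm (f1_c1 _) (f1_c1 _) HK2 HK1 H.
- move=> C' r' HD HG Hg Heq.
  by apply: (P3 HXY) => //; [rewrite -Heq | apply: inK_D1].
- move=> C' r' _ HD HG _ Hh.
  by apply: (P3 HYX) => //; apply: inK_D1.
- by rewrite !rt1 // f1_D1.
Qed.

Theorem main : k_cops_win adj 2.
Proof.
exists [ffun _ => q0] => r.
have H0 : (ord0 : 'I_2) != ord_max by [].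
have HK0 : [ffun _ => q0] (ord0 : 'I_2) \in inK by rewrite ffunE.
have HK1 : [ffun _ => q0] (ord_max : 'I_2) \in inK by rewrite ffunE.
apply: (hunt adj_sym HtreeK (iG := ord0) (iH := ord_max) (Ir := fun _ => True)
  (h := sg) (gp := fun _ => q0) (Gd := inK)) => //.
- by move=> r1 r2 _ _; exact: nbc_refl.
- by move=> r1 _; exact: sg_K.
- move=> r1 r2 _ Hne Hn.
  case/orP: (sg_nbc Hn) => [/eqP ->|/adjE [H|H]].
  + by apply: Or33; split => //; exact: tm_refl.
  + case: (K_tm (sg_K r1) (sg_K r2) H) => [Ht|Hq].
      by apply: Or33.
    by apply: Or32.
  + case: (K_tm (sg_K r2) (sg_K r1) H) => [Ht|Hq].
      by apply: Or33; split => //; exact: tm_sym.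
    by exfalso; apply: Hne.
- move=> C' r' HD HG Hg Heq.
  by apply: (P2 H0) => //; [rewrite -Heq | apply: inK_D1].
- move=> C' r' _ HD HG _ Hh.
  by apply: (P2 (X := ord_max) (Y := ord0)) => //; apply: inK_D1.
- by rewrite ffunE nbc_refl.
- by rewrite ffunE !rtK // sg_K.
Qed.

End Concrete.

Unset Implicit Arguments.

Theorem lemma5 (s l m : nat) (V : finType) (arc : rel V)
    (pin pout : arcT arc -> 'I_(2 ^ (s - 1))) (sigma : 'I_#|V| -> V) :
  1 <= s -> 1 <= m -> #|V| + m + s < l ->
  Hs_oriented s arc ->
  (forall e e' : arcT arc, (val e).2 = (val e').2 -> pin e = pin e' -> e = e') ->
  (forall e e' : arcT arc, (val e).1 = (val e').1 -> pout e = pout e' -> e = e') ->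
  injective sigma ->
  cop_number_le (@Hslm_adj s l m V arc pin pout sigma) 2.
Proof.
move=> Hs Hm Hl [_ _ Hout' _ _] _ _ Hsig.
case: (pickP (fun _ : V => true)) => [a0 _|Hnone].
  exists 2; split => //.
  apply: (main pin pout Hs Hm Hl Hsig a0) => a.
  have : 0 < #|[set b | arc a b]| by rewrite Hout' expn_gt0.
  case/card_gt0P => b; rewrite inE => Hab.
  by exists (exist _ (a, b) Hab).
exists 0; split => //.
exists (ffun0 (card_ord 0)) => r.
exfalso.
case: r => [[[a c] i]|[[e t]|[[[[e c] t] d]|[a j]]]];
  try (by have := Hnone a); by have := Hnone (val e).1.
Qed.
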